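(* Let $G$ be a group with identity $e$, $A$ a set with at least two elements, and $\tau: A^G\to A^G$ a lazy cellular automaton with minimal neighborhood $S \subseteq G$, unique active transition $p \in A^S$ and writing symbol $a \in A \setminus \{p(e)\}$. For $b \in A$ let $S_b := p^{-1}\{b\} = \{s\in S : p(s) = b\}$. Then $\mathrm{ord}(\tau)$ is at most the minimum $n\geq 2$ (if one exists) such that for every word $(s_1, \ldots, s_{n-1})\in (S_a)^{n-1}$ there exist $1 \leq i \leq j \leq n-1$ satisfying at least one of the following: \begin{enumerate} \item $(s_j\cdots s_i)^{-1}\in S_b^{-1}S_a$ for some $b\in A\setminus\{a\}$; \item $(s_j\cdots s_i)^{-1}\in S_{b_1}^{-1}S_{b_2}$ for some $b_1, b_2\in A\setminus\{a\}$ with $b_1\neq b_2$. \end{enumerate}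
   Context: $A^G$ is the set of maps $G \to A$ with shift action $(g\cdot x)(h) := x(hg)$. A cellular automaton is a map $\tau : A^G \to A^G$ with a finite $S \subseteq G$ (a neighborhood) and $\mu : A^S \to A$ such that $\tau(x)(g) = \mu((g\cdot x)|_S)$; the minimal neighborhood is the unique neighborhood of smallest cardinality. $\tau$ is lazy with unique active transition $p \in A^S$ if there is a local defining map $\mu : A^S \to A$ with $e \in S$ such that for all $z \in A^S$: $\mu(z) = z(e)$ iff $z \neq p$; its writing symbol is $a:=\mu(p)$. $\tau^k$ is the $k$-fold composition, $\tau^0$ the identity; $\mathrm{ord}(\tau) := |\{\tau^k : k \in \mathbb{N}\}|$, $\mathbb{N}=\{0,1,\dots\}$. For $S, K \subseteq G$, $SK := \{sk : s\in S, k \in K\}$ and $S^{-1} := \{s^{-1} : s\in S\}$. *)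

(* Defs.v *)
From HB Require Import structures.
From mathcomp Require Import all_boot finmap.

Unset Strict Implicit.
Unset Printing Implicit Defensive.

Local Open Scope group_scope.
Local Open Scope fset_scope.

Section CA.
Variables (G : groupType) (A : Type).

Definition shift (g : G) (x : G -> A) : G -> A := fun h => x (h * g).

Definition restrict (S : {fset G}) (x : G -> A) : S -> A := fun s => x (val s).

Definition local_rule (tau : (G -> A) -> (G -> A)) (S : {fset G})
    (mu : (S -> A) -> A) : Prop :=
  forall (x : G -> A) (g : G), tau x g = mu (restrict S (shift g x)).

Definition is_neighborhood (tau : (G -> A) -> (G -> A)) (S : {fset G}) : Prop :=
  exists mu : (S -> A) -> A, local_rule tau S mu.

Definition is_cellular_automaton (tau : (G -> A) -> (G -> A)) : Prop :=
  exists S : {fset G}, is_neighborhood tau S.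

Definition is_minimal_neighborhood (tau : (G -> A) -> (G -> A)) (S : {fset G}) : Prop :=
  is_neighborhood tau S /\
  forall S' : {fset G}, is_neighborhood tau S' -> #|` S| <= #|` S'|.

Definition lazy_with (tau : (G -> A) -> (G -> A)) (S : {fset G}) (p : S -> A)
    (a : A) : Prop :=
  exists mu : (S -> A) -> A, local_rule tau S mu /\
  exists he : (1 : G) \in S,
    (forall z : S -> A, mu z = z [` he] <-> z <> p) /\ mu p = a.

(* ord(tau) <= n : the set {tau^k : k in N} has at most n elements *)
Definition ord_le (tau : (G -> A) -> (G -> A)) (n : nat) : Prop :=
  exists ts : seq ((G -> A) -> (G -> A)),
    size ts <= n /\
    forall k : nat, exists2 i : nat, i < size ts & iter k tau = nth tau ts i.

Definition in_Sb (S : {fset G}) (p : S -> A) (b : A) (g : G) : Prop :=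
  exists hg : g \in S, p [` hg] = b.

(* for a word w = (s_1,...,s_m) and 0-based i <= j, the product s_j ... s_i *)
Definition word_prod (w : seq G) (i j : nat) : G :=
  \prod_(s <- rev (drop i (take j.+1 w))) s.

Definition word_condition (S : {fset G}) (p : S -> A) (a : A) (n : nat) : Prop :=
  forall w : seq G, size w = n.-1 -> (forall s, s \in w -> in_Sb S p a s) ->
  exists i j : nat, i <= j /\ j < n.-1 /\
   ( (exists b : A, b <> a /\
        exists t u : G, in_Sb S p b t /\ in_Sb S p a u /\
          (word_prod w i j)^-1 = t^-1 * u)
   \/ (exists b1 b2 : A, b1 <> a /\ b2 <> a /\ b1 <> b2 /\
        exists t u : G, in_Sb S p b1 t /\ in_Sb S p b2 u /\
          (word_prod w i j)^-1 = t^-1 * u) ).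

End CA.

Arguments shift {G A}.
Arguments restrict {G A}.
Arguments local_rule {G A}.
Arguments is_neighborhood {G A}.
Arguments is_cellular_automaton {G A}.
Arguments is_minimal_neighborhood {G A}.
Arguments lazy_with {G A}.
Arguments ord_le {G A}.
Arguments in_Sb {G A}.
Arguments word_prod {G}.
Arguments word_condition {G A}.

(* Main.v *)
Require Import Defs.
From HB Require Import structures.
From mathcomp Require Import all_boot finmap.
From Stdlib Require Import Classical FunctionalExtensionality.
From mathcomp Require Import zify.

Local Open Scope group_scope.
Local Open Scope fset_scope.

Set Implicit Arguments.
Section Proof.
Variables (G : groupType) (A : Type) (tau : (G -> A) -> (G -> A)) (S : {fset G})
  (p : S -> A) (a : A) (mu : (S -> A) -> A) (hloc : local_rule tau S mu)
  (he : (1 : G) \in S) (hmu : forall z : S -> A, mu z = z [` he] <-> z <> p)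
  (hpa : mu p = a) (ha : a <> p [` he]).

Definition active (y : G -> A) (g : G) := restrict S (shift g y) = p.

Lemma F1a y g : active y g -> tau y g = a.
Proof. by rewrite hloc /active => ->. Qed.

Lemma F1b y g : ~ active y g -> tau y g = y g.
Proof.
move=> H; rewrite hloc; have := proj2 (hmu (restrict S (shift g y))) H.
by rewrite /restrict /shift /= mul1g.
Qed.

Lemma F1 y g : tau y g = a \/ tau y g = y g.
Proof. case: (classic (active y g)) => H; [left; exact: F1a | right; exact: F1b]. Qed.

Lemma act_val y g (s : S) : active y g -> y (val s * g) = p s.
Proof. by move=> H; rewrite -H. Qed.

Lemma act_e y g : active y g -> y g = p [` he].
Proof. by move=> H; rewrite -(act_val [` he] H) /= mul1g. Qed.

Lemma stay x k c d : iter (d + k) tau x c = iter k tau x c \/ iter (d + k) tau x c = a.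
Proof.
elim: d => [|d IH]; first by left.
rewrite addSn /=; case: (F1 (iter (d + k) tau x) c) => ->; first by right.
exact: IH.
Qed.

Lemma back x k g : active (iter k.+1 tau x) g ->
  exists s, in_Sb S p a s /\ active (iter k tau x) (s * g).
Proof.
move=> H.
have NA : ~ active (iter k tau x) g.
  move=> H'; have := act_e H; rewrite /= (F1a H') => E; exact: ha.
have [s Hs] : exists s : S, iter k tau x (val s * g) <> p s.
  apply: NNPP => N; apply: NA; apply: functional_extensionality => s.
  apply: NNPP => N'; apply: N; exists s; exact: N'.
have Hs' := act_val s H; rewrite /= in Hs'.
case: (F1 (iter k tau x) (val s * g)) => E.
- have Hact : active (iter k tau x) (val s * g).
    by apply: NNPP => N; apply: Hs; rewrite -(F1b N).
  by exists (val s); split => //; exists (valP s); rewrite fsetsubE -Hs' (F1a Hact).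
- by exfalso; apply: Hs; rewrite -E.
Qed.

Definition P (w : seq G) i : G := \prod_(r <- rev (take i w)) r.

Lemma chain x m g : active (iter m tau x) g -> forall j, j <= m ->
  exists w : seq G, size w = j /\ (forall s, s \in w -> in_Sb S p a s) /\
    forall i, i <= j -> active (iter (m - i) tau x) (P w i * g).
Proof.
move=> Hg; elim => [|j IH] Hj.
  exists [::]; split => //; split => // i; rewrite leqn0 => /eqP ->.
  by rewrite subn0 /P /= big_nil mul1g.
have [w [sw [inw Aw]]] := IH (ltnW Hj).
have := Aw j (leqnn j); have -> : m - j = (m - j.+1).+1 by rewrite subnSK.
case/back => s [Hs As].
exists (rcons w s); split; first by rewrite size_rcons sw.
split.
  by move=> r; rewrite mem_rcons in_cons => /orP [/eqP -> //|]; apply: inw.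
move=> i; rewrite leq_eqVlt => /orP [/eqP ->|Hi].
  rewrite /P -cats1 take_cat sw ltnNge leqnSn subSnn /= rev_cat /= big_cons. rewrite -mulgA; by rewrite /P take_oversize ?sw in As.
have -> : P (rcons w s) i = P w i.
  by rewrite /P -cats1 takel_cat // sw -ltnS.
exact: Aw.
Qed.

Lemma Pword (w : seq G) i j : i <= j.+1 -> P w j.+1 = word_prod w i j * P w i.
Proof.
move=> hij; rewrite /P /word_prod.
rewrite -{1}(cat_take_drop i (take j.+1 w)) take_takel // rev_cat big_cat.
by [].
Qed.

End Proof.

Theorem theorem2 (G : groupType) (A : Type)
  (two_elems : exists x y : A, x <> y)
  (tau : (G -> A) -> (G -> A)) (S : {fset G}) (p : S -> A) (a : A)
  (hCA : is_cellular_automaton tau)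
  (hmin : is_minimal_neighborhood tau S)
  (hlazy : lazy_with tau S p a)
  (ha : forall he : (1 : G) \in S, a <> p [` he]) :
  forall n : nat, 2 <= n -> word_condition S p a n -> ord_le tau n.
Proof.
move=> n Hn WC.
case: hlazy => mu [hloc [he [hmu hpa]]].
have ha' := ha he.
have key : forall x g, ~ active p (iter n.-1 tau x) g.
  move=> x g Hg; set m := n.-1.
  have [w [sw [inw Aw]]] := chain hloc hmu hpa ha' x m Hg m (leqnn m).
  have [i [j [Hij [Hj C]]]] := WC w sw inw.
  have Hi := Aw i (leq_trans Hij (ltnW Hj)).
  have Hj1 := Aw j.+1 Hj.
  have EP := Pword G w i j (leqW Hij).
  have common : forall t u (ht : t \in S) (hu : u \in S),
      (word_prod w i j)^-1 = t^-1 * u ->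
      iter (m - i) tau x (t * (P G w i * g)) = p [` ht] /\
      iter (m - j.+1) tau x (t * (P G w i * g)) = p [` hu] /\
      (iter (m - i) tau x (t * (P G w i * g)) = iter (m - j.+1) tau x (t * (P G w i * g)) \/
       iter (m - i) tau x (t * (P G w i * g)) = a).
    move=> t u ht hu E.
    have E' : word_prod w i j = u^-1 * t by apply: invg_inj; rewrite E invgM invgK.
    have Ec : u * (P G w j.+1 * g) = t * (P G w i * g).
      by rewrite EP E' -!mulgA mulVKg.
    split; first exact: (act_val [` ht] Hi).
    split; first by rewrite -Ec; exact: (act_val [` hu] Hj1).
    have := stay hloc hmu hpa x (m - j.+1) (t * (P G w i * g)) (j.+1 - i).
    have -> : (j.+1 - i + (m - j.+1) = m - i)%N by move: Hij Hj; rewrite /m; clear; lia.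
    done.
  case: C => [[b [bna [t [u [[ht Ht] [[hu Hu] Eq]]]]]] | [b1 [b2 [b1a [b2a [b12 [t [u [[ht Ht] [[hu Hu] Eq]]]]]]]]]].
  - have [E1 [E2 [E3|E3]]] := common t u ht hu Eq.
    + by apply: bna; rewrite -Ht -E1 E3 E2.
    + by apply: bna; rewrite -Ht -E1 E3.
  - have [E1 [E2 [E3|E3]]] := common t u ht hu Eq.
    + by apply: b12; rewrite -Ht -Hu -E1 E3 E2.
    + by apply: b1a; rewrite -Ht -E1 E3.
have stab : forall k, iter (k + n.-1) tau = iter n.-1 tau.
  elim => [//|k IH].
  apply: functional_extensionality => x; apply: functional_extensionality => g.
  rewrite addSn iterS IH.
  by have := F1b hloc hmu (key x g).
exists (mkseq (fun i => iter i tau) n); split; first by rewrite size_mkseq.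
move=> k; rewrite size_mkseq.
case: (ltnP k n) => hk.
  by exists k => //; rewrite nth_mkseq.
exists n.-1; first by rewrite prednK // ltnW.
rewrite nth_mkseq; last by rewrite prednK // ltnW.
by rewrite -(stab (k - n.-1)) subnK // (leq_trans _ hk) // leq_pred.
Qed.
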